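(* There exists a distribution $F$ (with $n=2$ bidders per step, so the joint value distribution is $F^2$) such that the WDPP mechanism is asymptotically stable with respect to $F^2$ but the UDPP mechanism is unstable (not asymptotically stable) with respect to $F^2$.
   Context: Dynamic posted-price setting: at each time step a block with $m$ slots is produced; $n$ bidders arrive with values drawn i.i.d. from $F$ (joint distribution $F^n$), each participating once and bidding truthfully. Given posted price $q>0$, $M(q)=\{i:b_i\ge q\}$; a block $B\subseteq M(q)$ with $|B|\le m$ is chosen, each $i\in B$ gets a slot and pays $q$, and the next price is $T(q,B)$. WDPP: $B$ is the $\min\{m,|M(q)|\}$ highest bids in $M(q)$, and $T_W(q,B)=\alpha\frac1m\sum_{i\in B}b_i+(1-\alpha)q$, $\alpha\in[0,1]$. UDPP: $B$ is a uniformly random subset of $M(q)$ of size $\min\{m,|M(q)|\}$, and $T_U(q,B)=\alpha\frac{|B|}{m}(1+\delta)q+(1-\alpha)q$, $\alpha\in(0,1)$, $\delta>0$. Let $E_T(q)=\mathbb{E}[T(q,B)]$ over values and allocation randomness; an equilibrium price is $z$ with $E_T(z)=z$. The mechanism is asymptotically stable with respect to $F^n$ if for every $q_0>0$ the sequence $q_{k+1}=E_T(q_k)$ converges to an equilibrium price; otherwise it is unstable. *)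

(* Defs.v *)
From HB Require Import structures.
From mathcomp Require Import all_boot all_order all_algebra.
From mathcomp Require Import all_classical all_reals all_analysis.
Set Implicit Arguments. Unset Strict Implicit. Unset Printing Implicit Defensive.
Import Order.TTheory GRing.Theory Num.Theory.
Import numFieldNormedType.Exports.
Local Open Scope classical_set_scope.
Local Open Scope ring_scope.

Section DPP.
Variable R : realType.

Definition Mq (q : R) (bs : seq R) : seq R := seq.filter (fun b => q <= b) bs.

Definition blockW (m : nat) (q : R) (bs : seq R) : seq R :=
  take m (sort (fun x y => y <= x) (Mq q bs)).

Definition TW (m : nat) (alpha q : R) (bs : seq R) : R :=
  alpha * (m%:R)^-1 * (\sum_(b <- blockW m q bs) b) + (1 - alpha) * q.

(* UDPP: |B| = min(m, |M(q)|) for the uniformly random block; T_U depends on B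
   only through |B|, so it is a deterministic function of the bids. *)
Definition TU (m : nat) (alpha delta q : R) (bs : seq R) : R :=
  alpha * ((minn m (size (Mq q bs)))%:R / m%:R) * (1 + delta) * q + (1 - alpha) * q.

Definition ET2 (F : probability R R) (T : R -> seq R -> R) (q : R) : R :=
  fine (\int[F \x F]_p (T q [:: p.1; p.2])%:E)%E.

Definition asymptotically_stable (F : probability R R) (T : R -> seq R -> R) : Prop :=
  forall q0 : R, 0 < q0 ->
    exists z : R, ET2 F T z = z /\
      (fun k : nat => iter k (ET2 F T) q0) @ \oo --> z.

End DPP.

(* Main.v *)
Require Import Defs.
From HB Require Import structures.
From mathcomp Require Import all_boot all_order all_algebra.
From mathcomp Require Import all_classical all_reals all_analysis.
From mathcomp Require Import measurable_realfun.
From mathcomp Require Import lra.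
Import Order.TTheory GRing.Theory Num.Theory.
Import numFieldNormedType.Exports.
Local Open Scope classical_set_scope.
Local Open Scope ring_scope.

Section S.
Variable R : realType.
Let F : probability R R := \d_(1:R).

Lemma prodF (X : set (R * R)) : measurable X -> (F \x F)%E X = \d_((1:R),(1:R)) X.
Proof.
apply: product_measure_unique => A B mA mB.
rewrite /F /= /dirac !indicE -EFinM; congr (_%:E).
have -> : ((1:R,1:R) \in A `*` B) = (1 \in A) && (1 \in B).
  apply/idP/andP => [/set_mem [] ? ?|[/set_mem ? /set_mem ?]]; first by split; apply/mem_set.
  by apply/mem_set.
case: (boolP (1 \in A)) => hA; case: (boolP (1 \in B)) => hB /=; rewrite ?mul1r ?mulr0 ?mul0r.
all: by [].
Qed.

Lemma ET2F (T : R -> seq R -> R) q :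
  measurable_fun setT (fun p : R * R => T q [:: p.1; p.2]) ->
  ET2 F T q = T q [:: 1; 1].
Proof.
move=> mT; rewrite /ET2 (eq_measure_integral (\d_((1:R),(1:R)))); last first.
  by move=> A mA _; exact: prodF.
rewrite integral_dirac //; last exact/measurable_EFinP.
by rewrite diracT mul1e.
Qed.

Lemma TW2E (alpha q x y : R) : TW 2 alpha q [:: x; y] =
  alpha * 2^-1 * (x * (q <= x)%R%:R + y * (q <= y)%R%:R) + (1 - alpha) * q.
Proof.
rewrite /TW /blockW take_oversize; last first.
  by rewrite size_sort /Mq size_filter (leq_trans (count_size _ _)).
rewrite (perm_big _ (permEl (perm_sort _ _))) /Mq /=.
by case: ifP => _; case: ifP => _; rewrite ?big_cons ?big_nil /= ?mulr1n ?mulr0n ?mulr1 ?mulr0 ?addr0 ?add0r ?mulr0 ?add0r.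
Qed.

Lemma TU2E (alpha delta q x y : R) : TU 2 alpha delta q [:: x; y] =
  alpha * (((q <= x)%R%:R + (q <= y)%R%:R) / 2) * (1 + delta) * q + (1 - alpha) * q.
Proof.
rewrite /TU /Mq /=.
by case: ifP => _; case: ifP => _; rewrite /= -natrD.
Qed.

Lemma mind1 (q : R) : measurable_fun setT (fun p : R * R => (q <= p.1)%R%:R : R).
Proof.
have -> : (fun p : R * R => (q <= p.1)%R%:R : R) = \1_(setT `&` (fun p : R * R => q <= p.1) @^-1` [set true]).
  apply/funext => p; rewrite indicE; congr (_%:R); congr nat_of_bool.
  apply/idP/idP => [h|/set_mem [_ /= ->]//]; apply/mem_set; split => //.
apply: (@measurable_indic _ _ R).
apply: (measurable_fun_ler (measurable_cst q) measurable_fst) => //.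
Qed.

Lemma mind2 (q : R) : measurable_fun setT (fun p : R * R => (q <= p.2)%R%:R : R).
Proof.
have -> : (fun p : R * R => (q <= p.2)%R%:R : R) = \1_(setT `&` (fun p : R * R => q <= p.2) @^-1` [set true]).
  apply/funext => p; rewrite indicE; congr (_%:R); congr nat_of_bool.
  apply/idP/idP => [h|/set_mem [_ /= ->]//]; apply/mem_set; split => //.
apply: (@measurable_indic _ _ R).
apply: (measurable_fun_ler (measurable_cst q) measurable_snd) => //.
Qed.

Lemma mTW (alpha q : R) : measurable_fun setT (fun p : R * R => TW 2 alpha q [:: p.1; p.2]).
Proof.
rewrite (_ : (fun p : R * R => TW 2 alpha q [:: p.1; p.2]) = (fun p => 
  alpha * 2^-1 * (p.1 * (q <= p.1)%R%:R + p.2 * (q <= p.2)%R%:R) + (1 - alpha) * q)); last first.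
  by apply/funext => p; rewrite TW2E.
apply: measurable_funD; last exact: measurable_cst.
apply: measurable_funM; first exact: measurable_cst.
apply: measurable_funD; apply: measurable_funM.
- exact: measurable_fst.
- exact: mind1.
- exact: measurable_snd.
- exact: mind2.
Qed.

Lemma mTU (alpha delta q : R) : measurable_fun setT (fun p : R * R => TU 2 alpha delta q [:: p.1; p.2]).
Proof.
rewrite (_ : (fun p : R * R => TU 2 alpha delta q [:: p.1; p.2]) = (fun p => 
  alpha * (((q <= p.1)%R%:R + (q <= p.2)%R%:R) / 2) * (1 + delta) * q + (1 - alpha) * q)); last first.
  by apply/funext => p; rewrite TU2E.
apply: measurable_funD; last exact: measurable_cst.
apply: measurable_funM; last exact: measurable_cst.
apply: measurable_funM; last exact: measurable_cst.
apply: measurable_funM; first exact: measurable_cst.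
apply: measurable_funM; last exact: measurable_cst.
apply: measurable_funD.
- exact: mind1.
- exact: mind2.
Qed.

Lemma fWE (alpha q : R) : ET2 F (TW 2 alpha) q = if q <= 1 then alpha + (1 - alpha) * q else (1 - alpha) * q.
Proof.
rewrite ET2F; last exact: mTW.
rewrite TW2E; case: (q <= 1) => /=; rewrite ?mulr1n ?mulr0n; lra.
Qed.

Lemma fUE (alpha delta q : R) : ET2 F (TU 2 alpha delta) q = if q <= 1 then (1 + alpha * delta) * q else (1 - alpha) * q.
Proof.
rewrite ET2F; last exact: mTU.
rewrite TU2E; case: (q <= 1) => /=; rewrite ?mulr1n ?mulr0n; lra.
Qed.

Lemma stableW (alpha : R) (f : R -> R) (q0 : R) : 0 < alpha -> alpha <= 1 -> 0 < q0 ->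
  (forall q, f q = if q <= 1 then alpha + (1 - alpha) * q else (1 - alpha) * q) ->
  (fun k : nat => iter k f q0) @ \oo --> (1:R).
Proof.
move=> a0 a1 q00 hf.
set u := fun k : nat => iter k f q0.
have uS k : u k.+1 = f (u k) by [].
set r := 1 - alpha.
have r0 : 0 <= r by rewrite /r; lra.
have r1 : r < 1 by rewrite /r; lra.
have ar : alpha = 1 - r by rewrite /r; lra.
set M := q0 + 1.
have nn k : 0 <= u k.
  elim: k => [|k IH]; first by rewrite /u /=; lra.
  rewrite uS hf; case: ifP => _; rewrite -/r; nra.
have key k : (u k <= 1 \/ u k <= r ^+ k * q0) /\ 1 - r ^+ k * M <= u k.+1.
  elim: k => [|k [IHU IHL]].
    split; first by right; rewrite expr0 mul1r /u.
    have := nn 1%N; rewrite expr0 mul1r /M; lra.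
  have pk0 : 0 <= r ^+ k by rewrite exprn_ge0.
  have U1 : u k.+1 <= 1 \/ u k.+1 <= r ^+ k.+1 * q0.
    rewrite uS hf; case: ifP => hk; rewrite -/r.
      left; have := nn k; move: hk; nra.
    right; rewrite exprS; case: IHU => h; first by rewrite h in hk.
    rewrite -mulrA; exact: ler_wpM2l.
  split => //.
  rewrite (uS k.+1) hf; case: ifP => hk; rewrite -/r.
    rewrite exprS; have : r * (1 - u k.+1) <= r * (r ^+ k * M).
      by apply: ler_wpM2l => //; lra.
    lra.
  have hk' : 1 < u k.+1 by rewrite ltNge hk.
  have pk1 : 0 <= r ^+ k.+1 by rewrite exprn_ge0.
  case: U1 => h; first lra.
  have : r <= r * u k.+1 by rewrite -{1}(mulr1 r); apply: ler_wpM2l => //; lra.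
  rewrite /M; nra.
have bnd k : 1 - r ^+ k * M <= u (k + 1)%N <= 1 + r ^+ k * M.
  rewrite addn1; have [[h|h] L] := key k.+1; have [_ L'] := key k;
  apply/andP; split => //; have pk0 : 0 <= r ^+ k by rewrite exprn_ge0.
    rewrite /M; nra.
  have : r ^+ k.+1 * q0 <= r ^+ k * M.
    rewrite exprS /M -mulrA; have : 0 <= r ^+ k * q0 by nra.
    nra.
  lra.
rewrite -(cvg_shiftn 1).
have hr : (fun k : nat => r ^+ k) @ \oo --> 0.
  by apply: cvg_expr; rewrite ger0_norm.
have hrM : (fun k : nat => r ^+ k * M) @ \oo --> 0.
  by rewrite -(mul0r M); apply: cvgMr_tmp.
apply: (@squeeze_cvgr _ _ _ _ (fun k => 1 - r ^+ k * M) (fun k => 1 + r ^+ k * M)).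
- by apply: nearW => k; exact: bnd.
- by rewrite -[X in _ --> X](subr0 1); apply: cvgB => //; exact: cvg_cst.
- by rewrite -[X in _ --> X](addr0 1); apply: cvgD => //; exact: cvg_cst.
Qed.
End S.

Theorem mainTheorem4 (R : realType) :
  exists (m : nat) (F : probability R R),
    (0 < m)%N /\
    F [set x : R | 0 <= x] = 1%E /\
    F.-integrable setT (fun x : R => x%:E) /\
    (forall alpha : R, 0 <= alpha <= 1 ->
       asymptotically_stable F (TW m alpha)) /\
    (forall alpha delta : R, 0 < alpha < 1 -> 0 < delta ->
       ~ asymptotically_stable F (TU m alpha delta)).
Proof.
exists 2%N, (\d_(1:R) : probability R R).
split => //.
split.
  by rewrite /= /dirac indicE mem_set //= ler01.
split.
  apply/integrableP; split; first exact/measurable_EFinP/measurable_id.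
  rewrite integral_dirac //=; last by apply/(@measurable_EFinP _ _ _ _ (@Num.norm _ R)); exact: normr_measurable.
  by rewrite diracT mul1e normr1 ltry.
split.
  move=> alpha /andP[a0 a1] q0 q00.
  have [->|a0'] := eqVneq alpha 0.
    exists q0; have fid q : ET2 (\d_(1:R) : probability R R) (TW 2 0) q = q.
      by rewrite fWE; case: ifP => _; lra.
    split; first exact: fid.
    have -> : (fun k : nat => iter k (ET2 (\d_(1:R) : probability R R) (TW 2 0)) q0) = fun=> q0.
      by apply/funext => k; elim: k => //= k ->; rewrite fid.
    exact: cvg_cst.
  have ap : 0 < alpha by rewrite lt_neqAle eq_sym a0' a0.
  exists 1; split; first by rewrite fWE lexx; lra.
  by apply: stableW ap a1 q00 _ => q; rewrite fWE.
move=> alpha delta /andP[a0 a1] d0 hst; have [z [fz hz]] := hst 1 ltr01.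
have g q : ET2 (\d_(1:R) : probability R R) (TU 2 alpha delta) q =
   if q <= 1 then (1 + alpha * delta) * q else (1 - alpha) * q by rewrite fUE.
have z0 : z = 0.
  move: fz; rewrite g; case: ifP => hz1 h.
    have : alpha * delta * z = 0 by lra.
    move/eqP; rewrite !mulf_eq0 => /orP[/orP[]|] /eqP h'; [lra|lra|exact: h'].
  have : alpha * z = 0 by lra.
  move/eqP; rewrite mulf_eq0 => /orP[] /eqP h'; lra.
have lb k : 1 - alpha <= iter k (ET2 (\d_(1:R) : probability R R) (TU 2 alpha delta)) 1.
  elim: k => [|k IH] /=; first lra.
  rewrite g; case: ifP => h.
    have : 0 <= alpha * delta * iter k (ET2 (\d_(1:R) : probability R R) (TU 2 alpha delta)) 1.
      by rewrite !mulr_ge0 //; lra.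
    lra.
  have h' : 1 < iter k (ET2 (\d_(1:R) : probability R R) (TU 2 alpha delta)) 1 by rewrite ltNge h.
  nra.
have : 1 - alpha <= lim ((fun k : nat => iter k (ET2 (\d_(1:R) : probability R R) (TU 2 alpha delta)) 1) @ \oo).
  apply: limr_ge; first exact: (cvgP _ hz).
  by apply: nearW => k; exact: lb.
rewrite (cvg_lim _ hz); last exact: norm_hausdorff.
rewrite z0; lra.
Qed.
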